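(* For all integers $J\geq 0$ and $N\geq 0$, $\mathfrak{m}_{\mathrm{odd}}(0,2J+1;36N+r)\equiv 0\pmod 4$ for $r\in\{21,33\}$.
   Context: For $a\in\{-2,-1,0,1,2\}$ and integer $t\geq0$, the integers $\mathfrak{m}_{\mathrm{odd}}(a,t;n)$ are defined by $\sum_{n\geq0}\mathfrak{m}_{\mathrm{odd}}(a,t;n)q^n=\sum\prod_{k=1}^t\frac{q^{n_k}}{1+aq^{n_k}+q^{2n_k}}$, the sum running over all $t$-tuples of odd positive integers $n_1<n_2<\cdots<n_t$ (for $t=0$ the series is $1$). *)

(* Defs.v *)
From mathcomp Require Import all_boot all_order all_algebra.
Set Implicit Arguments. Unset Strict Implicit. Unset Printing Implicit Defensive.
Import Order.TTheory GRing.Theory Num.Theory.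
Local Open Scope ring_scope.

(* Formal power series in q with integer coefficients: coefficient functions. *)
Definition ps := nat -> int.

Definition ps_one : ps := fun n => (n == 0)%N%:R.
Definition ps_mon (m : nat) : ps := fun n => (n == m)%N%:R.
Definition ps_mul (f g : ps) : ps := fun n => \sum_(i < n.+1) f i * g (n - i)%N.

(* Coefficients 0..n of the multiplicative inverse of a series f with
   constant term f 0 = 1:  g 0 = 1,  g m = - sum_{j=1}^m f j * g (m-j). *)
Fixpoint ps_inv_seq (f : ps) (n : nat) : seq int :=
  match n with
  | 0 => [:: 1]
  | n'.+1 => let s := ps_inv_seq f n' in
             rcons s (- \sum_(k < n'.+1) f k.+1 * nth 0 s (n' - k)%N)
  end.
Definition ps_inv (f : ps) : ps := fun n => nth 0 (ps_inv_seq f n) n.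

Definition denom (a : int) (m : nat) : ps :=
  fun i => (i == 0)%N%:R + a * (i == m)%N%:R + (i == m.*2)%N%:R.
Definition factor (a : int) (m : nat) : ps := ps_mul (ps_mon m) (ps_inv (denom a m)).

(* m_odd(a,t;n): coefficient of q^n in the sum, over t-tuples of odd positive
   integers n_1 < ... < n_t (equivalently t-element sets of odd integers),
   of prod_k q^{n_k}/(1+a q^{n_k}+q^{2 n_k}).  Only tuples with all n_k <= n
   can contribute to the coefficient of q^n, so the sum is restricted to
   subsets of {0,...,n}. *)
Definition m_odd (a : int) (t n : nat) : int :=
  \sum_(S : {set 'I_n.+1} | (#|S| == t) && [forall i in S, odd i])
     (\big[ps_mul/ps_one]_(i in S) factor a i) n.

(* Main.v *)
Require Import Defs.
From mathcomp Require Import all_boot all_order all_algebra.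
From mathcomp Require Import zify ring.
From Stdlib Require Import Classical_Prop.
Set Implicit Arguments. Unset Strict Implicit. Unset Printing Implicit Defensive.
Import Order.TTheory GRing.Theory Num.Theory.
Local Open Scope ring_scope.

Definition cong {R : comPzRingType} (m a b : R) := exists c, a = b + m * c.

Lemma cong_refl {R : comPzRingType} (m a : R) : cong m a a.
Proof. by exists 0; rewrite mulr0 addr0. Qed.

Lemma cong_sym {R : comPzRingType} (m a b : R) : cong m a b -> cong m b a.
Proof. by case=> c ->; exists (- c); rewrite mulrN addrK. Qed.

Lemma cong_trans {R : comPzRingType} (m a b c : R) : cong m a b -> cong m b c -> cong m a c.
Proof. by case=> x -> [y ->]; exists (y + x); rewrite mulrDr addrA. Qed.

Lemma congD {R : comPzRingType} (m a b c d : R) : cong m a b -> cong m c d -> cong m (a + c) (b + d).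
Proof. by case=> x -> [y ->]; exists (x + y); rewrite mulrDr; ring. Qed.

Lemma congM {R : comPzRingType} (m a b c d : R) : cong m a b -> cong m c d -> cong m (a * c) (b * d).
Proof. by case=> x -> [y ->]; exists (b * y + x * d + m * x * y); ring. Qed.

Lemma congN {R : comPzRingType} (m a b : R) : cong m a b -> cong m (- a) (- b).
Proof. by case=> x ->; exists (- x); ring. Qed.

Lemma cong0 {R : comPzRingType} (m x : R) : cong m (m * x) 0.
Proof. by exists x; rewrite add0r. Qed.

Lemma cong_weak {R : comPzRingType} (m k a b : R) : cong (m * k) a b -> cong m a b.
Proof. by case=> x ->; exists (k * x); rewrite mulrA. Qed.

Lemma cong_prod {R : comPzRingType} (m : R) n (F G : nat -> R) :
  (forall i, (i < n)%N -> cong m (F i) (G i)) ->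
  cong m (\prod_(i < n) F i) (\prod_(i < n) G i).
Proof.
elim: n => [|n IH] H; first by rewrite !big_ord0; apply: cong_refl.
rewrite !big_ord_recr /=; apply: congM; last exact: H.
by apply: IH => i Hi; apply: H; lia.
Qed.

Lemma cong_sum {R : comPzRingType} (m : R) n (F G : nat -> R) :
  (forall i, (i < n)%N -> cong m (F i) (G i)) ->
  cong m (\sum_(i < n) F i) (\sum_(i < n) G i).
Proof.
elim: n => [|n IH] H; first by rewrite !big_ord0; apply: cong_refl.
rewrite !big_ord_recr /=; apply: congD; last exact: H.
by apply: IH => i Hi; apply: H; lia.
Qed.

Lemma cong_pow0 {R : comPzRingType} (q : R) M e : (M <= e)%N -> cong (q ^+ M) (q ^+ e) 0.
Proof. by move=> H; rewrite -(subnKC H) exprD; apply: cong0. Qed.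

Lemma cong_powM {R : comPzRingType} (q x : R) M e : (M <= e)%N -> cong (q ^+ M) (x * q ^+ e) 0.
Proof. by move=> H; rewrite -(subnKC H) exprD; exists (x * q ^+ (e - M)); rewrite add0r; ring. Qed.

Lemma cong_sum_ord {R : comPzRingType} (m : R) n (F G : 'I_n -> R) :
  (forall i, cong m (F i) (G i)) ->
  cong m (\sum_(i < n) F i) (\sum_(i < n) G i).
Proof.
move=> H; elim/big_rec2: _ => [|i x y _ Hxy]; first exact: cong_refl.
by apply: congD.
Qed.
Fixpoint qb {R : comPzRingType} (Q : R) (n i : nat) : R :=
  match n, i with
  | _, 0 => 1
  | 0, _.+1 => 0
  | n'.+1, i'.+1 => qb Q n' i'.+1 + Q ^+ (n' - i') * qb Q n' i'
  end.

Lemma qb_n0 {R : comPzRingType} (Q : R) n : qb Q n 0 = 1.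
Proof. by case: n. Qed.

Lemma qb_SS {R : comPzRingType} (Q : R) n i :
  qb Q n.+1 i.+1 = qb Q n i.+1 + Q ^+ (n - i) * qb Q n i.
Proof. by []. Qed.

Lemma qb_gt {R : comPzRingType} (Q : R) n i : (n < i)%N -> qb Q n i = 0.
Proof.
elim: n i => [|n IH] [|i] //= H.
by rewrite !IH ?mulr0 ?addr0 //; lia.
Qed.

Lemma qb_ratio {R : comPzRingType} (Q : R) n i :
  qb Q n i.+1 * (1 - Q ^+ i.+1) = qb Q n i * (1 - Q ^+ (n - i)).
Proof.
elim: n i => [|n IH] i.
  by rewrite /= mul0r sub0n expr0 subrr mulr0.
case: i => [|j].
  rewrite qb_SS !qb_n0 mulrDl IH qb_n0 subn0 expr1.
  have -> : Q ^+ n.+1 = Q ^+ n * Q by rewrite exprSr.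
  ring.
rewrite qb_SS [qb Q n.+1 j.+1]qb_SS subSS.
have I1 := IH j.+1; have I0 := IH j.
apply/eqP; rewrite -subr_eq0; apply/eqP.
have -> : (qb Q n j.+2 + Q ^+ (n - j.+1) * qb Q n j.+1) * (1 - Q ^+ j.+2) -
  (qb Q n j.+1 + Q ^+ (n - j) * qb Q n j) * (1 - Q ^+ (n - j)) =
  (qb Q n j.+2 * (1 - Q ^+ j.+2) - qb Q n j.+1 * (1 - Q ^+ (n - j.+1)))
  - Q ^+ (n - j) * (qb Q n j * (1 - Q ^+ (n - j)) - qb Q n j.+1 * (1 - Q ^+ j.+1))
  + qb Q n j.+1 * (Q ^+ (n - j) * Q ^+ j.+1 - Q ^+ (n - j.+1) * Q ^+ j.+2) by ring.
rewrite I1 I0 !subrr mulr0 subrr add0r.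
case: (ltnP n j.+1) => Hn; first by rewrite qb_gt // mul0r.
rewrite -!exprD (_ : (n - j + j.+1 = n - j.+1 + j.+2)%N) ?subrr ?mulr0 //; lia.
Qed.

Lemma qb_P1 {R : comPzRingType} (Q : R) n i :
  qb Q n.+1 i.+1 = Q ^+ i.+1 * qb Q n i.+1 + qb Q n i.
Proof.
rewrite qb_SS; apply/eqP; rewrite -subr_eq0; apply/eqP.
have -> : qb Q n i.+1 + Q ^+ (n - i) * qb Q n i - (Q ^+ i.+1 * qb Q n i.+1 + qb Q n i)
  = qb Q n i.+1 * (1 - Q ^+ i.+1) - qb Q n i * (1 - Q ^+ (n - i)) by ring.
by rewrite qb_ratio subrr.
Qed.

Lemma qb_two {R : comPzRingType} (Q : R) n i :
  qb Q n.+2 i.+2 = qb Q n i.+1 * (1 + Q ^+ n.+1) + qb Q n i * Q ^+ (n - i)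
                   + qb Q n i.+2 * Q ^+ i.+2.
Proof.
rewrite qb_P1 qb_SS qb_SS.
case: (ltnP n i.+1) => Hn.
  rewrite (qb_gt Q Hn) (@qb_gt _ Q n i.+2) ?mulr0 ?mul0r; last lia.
  ring.
have E : Q ^+ i.+2 * Q ^+ (n - i.+1) = Q ^+ n.+1 by rewrite -exprD; congr (_ ^+ _); lia.
have -> : Q ^+ i.+2 * (qb Q n i.+2 + Q ^+ (n - i.+1) * qb Q n i.+1) =
   qb Q n i.+2 * Q ^+ i.+2 + (Q ^+ i.+2 * Q ^+ (n - i.+1)) * qb Q n i.+1 by ring.
rewrite E; ring.
Qed.

Lemma qb_one2 {R : comPzRingType} (Q : R) n :
  qb Q n.+2 1 = (1 + Q ^+ n.+1) + qb Q n 1 * Q.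
Proof. rewrite qb_P1 qb_SS !qb_n0 subn0 expr1 (exprS Q n); ring. Qed.

Lemma qb_half {R : comPzRingType} (Q : R) n i :
  qb Q n i * \prod_(m < i) (1 - Q ^+ m.+1) = \prod_(m < i) (1 - Q ^+ (n - m)).
Proof.
elim: n i => [|n IH] [|i].
- by rewrite !big_ord0 qb_n0 mulr1.
- by rewrite /= mul0r big_ord_recl sub0n expr0 subrr mul0r.
- by rewrite !big_ord0 qb_n0 mulr1.
rewrite qb_SS mulrDl IH.
rewrite (big_ord_recr i (fun m => 1 - Q ^+ m.+1)) /=.
rewrite (_ : Q ^+ (n - i) * qb Q n i * (\prod_(i0 < i) (1 - Q ^+ i0.+1) * (1 - Q ^+ i.+1)) = Q ^+ (n - i) * (1 - Q ^+ i.+1) * (qb Q n i * \prod_(i0 < i) (1 - Q ^+ i0.+1))); last by ring.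
rewrite IH.
rewrite (big_ord_recr i (fun m => 1 - Q ^+ (n - m))) (big_ord_recl i (fun m => 1 - Q ^+ (n.+1 - m))) /=.
under [in RHS]eq_bigr => m _ do rewrite subSS.
set A := \prod_(m < i) (1 - Q ^+ (n - m)).
case: (ltnP n i) => Hn.
  have -> : A = 0.
    rewrite /A (bigD1 (Ordinal Hn)) //= subnn expr0 subrr; by rewrite mul0r.
  by ring.
have E : Q ^+ (n - i) * Q ^+ i.+1 = Q ^+ (n.+1 - 0) by rewrite -exprD; congr (_ ^+ _); lia.
have -> : A * (1 - Q ^+ (n - i)) + Q ^+ (n - i) * (1 - Q ^+ i.+1) * A
  = (1 - Q ^+ (n - i) * Q ^+ i.+1) * A by ring.
by rewrite E.
Qed.
Definition ee (K i : nat) : nat := ((K - i) + (i - K)) ^ 2.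

Lemma E0 K : (ee K 0 + (2*K+1) = ee K.+1 0)%N.
Proof. rewrite /ee; nia. Qed.
Lemma E1 K : (ee K 1 + (2*K+1) = 2 + ee K.+1 1)%N.
Proof. rewrite /ee; nia. Qed.
Lemma Eu1 K i : ee K.+1 i.+2 = ee K i.+1.
Proof. rewrite /ee; nia. Qed.
Lemma Eu2 K i : (i <= 2*K)%N -> (ee K i + (2*K+1) = 2*(2*K - i) + ee K.+1 i.+2)%N.
Proof. rewrite /ee; nia. Qed.
Lemma Eu3 K i : (ee K i.+2 + (2*K+1) = 2*i.+2 + ee K.+1 i.+2)%N.
Proof. rewrite /ee; nia. Qed.

Lemma sum_ext {R : comPzRingType} (F : nat -> R) n m : (n <= m)%N ->
  (forall i, (n <= i)%N -> F i = 0) -> \sum_(i < n) F i = \sum_(i < m) F i.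
Proof.
move=> H H0; rewrite -(subnKC H) big_split_ord /= [X in _ = _ + X]big1 ?addr0 // => i _.
by apply: H0; rewrite /= leq_addr.
Qed.

Lemma intE1 (i K : nat) : (i.+2%:Z - K.+1%:Z = i.+1%:Z - K%:Z)%R.
Proof. lia. Qed.

Lemma sum_recl {R : comPzRingType} (F : nat -> R) m :
  \sum_(i < m.+1) F i = F 0%N + \sum_(i < m) F i.+1.
Proof. by rewrite big_ord_recl; congr (_ + _); apply: eq_bigr => i _; rewrite lift0. Qed.

Lemma JT {R : comPzRingType} (z q : R) (a : int -> R)
  (Ha : forall j, z * a j = a (j + 1)%R + a (j - 1)%R) K :
  \prod_(k < K) (1 + z * q ^+ (2*k+1) + q ^+ (4*k+2)) * a 0
  = \sum_(i < (2*K).+1) qb (q ^+ 2) (2*K) i * a (i%:Z - K%:Z)%R * q ^+ ee K i.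
Proof.
elim: K => [|K IH].
  by rewrite big_ord0 big_ord1 mul1r /= /ee /= expr0 mulr1.
rewrite big_ord_recr mulrAC IH.
set n := (2 * K)%N.
set Q := q ^+ 2.
have Hn2 : (2 * K.+1 = n.+2)%N by rewrite /n; lia.
rewrite Hn2.
pose c i := qb Q n i.
pose u1 i := c i * (1 + Q ^+ n.+1) * a (i%:Z - K%:Z)%R * q ^+ ee K i.
pose u2 i := c i * a (i%:Z - K%:Z + 1)%R * q ^+ (ee K i + n.+1).
pose u3 i := c i * a (i%:Z - K%:Z - 1)%R * q ^+ (ee K i + n.+1).
have Hq4 : q ^+ (4 * K + 2) = Q ^+ n.+1 by rewrite /Q -exprM; congr (_ ^+ _); rewrite /n; lia.
have Hq2 : q ^+ (2 * K + 1) = q ^+ n.+1 by rewrite /n addn1.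
have L : \sum_(i < n.+1) qb Q n i * a (i%:Z - K%:Z)%R * q ^+ ee K i *
     (1 + z * q ^+ (2 * K + 1) + q ^+ (4 * K + 2))
   = \sum_(i < n.+1) (u1 i + u2 i + u3 i).
  apply: eq_bigr => i _; rewrite Hq4 Hq2 /u1 /u2 /u3 /c exprD.
  have := Ha (i%:Z - K%:Z)%R; rewrite -[(_ - _ - 1)%R]addrA => Hz.
  rewrite (_ : qb Q n i * a (i%:Z - K%:Z)%R * q ^+ ee K i *
     (1 + z * q ^+ n.+1 + Q ^+ n.+1) = qb Q n i * (1 + Q ^+ n.+1) * a (i%:Z - K%:Z)%R * q ^+ ee K i
     + qb Q n i * (z * a (i%:Z - K%:Z)%R) * (q ^+ ee K i * q ^+ n.+1)); last by ring.
  rewrite Hz; ring.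
rewrite big_distrl L !big_split.
have Z1 : forall i, (n.+1 <= i)%N -> u1 i = 0.
  by move=> i Hi; rewrite /u1 /c qb_gt // !mul0r.
have Z3 : forall i, (n.+1 <= i)%N -> u3 i = 0.
  by move=> i Hi; rewrite /u3 /c qb_gt // !mul0r.
rewrite (sum_ext (F:=u1) (leqnSn n.+1) Z1) (sum_ext (F:=u3) (_ : n.+1 <= n.+3)%N Z3) //.
rewrite (sum_recl u1) (sum_recl u3) (sum_recl (fun i => u3 i.+1)).
rewrite (sum_recl (fun i => qb Q n.+2 i * a (i%:Z - K.+1%:Z)%R * q ^+ ee K.+1 i)).
rewrite (sum_recl (fun i => qb Q n.+2 i.+1 * a (i.+1%:Z - K.+1%:Z)%R * q ^+ ee K.+1 i.+1)).
have R2 : \sum_(i < n.+1) qb Q n.+2 i.+2 * a (i.+2%:Z - K.+1%:Z)%R * q ^+ ee K.+1 i.+2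
   = \sum_(i < n.+1) (u1 i.+1 + u2 i + u3 i.+2).
  apply: eq_bigr => -[i Hi] _; rewrite qb_two.
  have I1 : (i.+2%:Z - K.+1%:Z = i.+1%:Z - K%:Z)%R by lia.
  have I2 : (i%:Z - K%:Z + 1 = i.+1%:Z - K%:Z)%R by lia.
  have I3 : (i.+2%:Z - K%:Z - 1 = i.+1%:Z - K%:Z)%R by lia.
  rewrite /u1 /u2 /u3 /c /= I1 I2 I3.
  have X2 : q ^+ (ee K i + n.+1) = Q ^+ (n - i) * q ^+ ee K.+1 i.+2.
    rewrite /Q -exprM -exprD; congr (_ ^+ _); have := Eu2 (i:=i) (K:=K); rewrite /n; lia.
  have X3 : q ^+ (ee K i.+2 + n.+1) = Q ^+ i.+2 * q ^+ ee K.+1 i.+2.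
    rewrite /Q -exprM -exprD; congr (_ ^+ _); have := Eu3 K i; rewrite /n; lia.
  rewrite X2 X3 -Eu1; ring.
rewrite R2 !big_split.
have Z1' : (forall i, (n <= i)%N -> u1 i.+1 = 0).
  by move=> i Hi; apply: Z1.
rewrite -(sum_ext (F:=fun i => u1 i.+1) (leqnSn n) Z1').
have T0 : u3 0%N = qb Q n.+2 0 * a (0%:Z - K.+1%:Z)%R * q ^+ ee K.+1 0.
  rewrite /u3 /c !qb_n0 -E0 /n addn1 (_ : (0%:Z - K%:Z - 1 = 0%:Z - K.+1%:Z)%R) //; lia.
have T1 : u1 0%N + u3 1%N = qb Q n.+2 1 * a (1%:Z - K.+1%:Z)%R * q ^+ ee K.+1 1.
  rewrite /u1 /u3 /c qb_one2 qb_n0.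
  have -> : (1%:Z - K%:Z - 1 = 0%:Z - K%:Z)%R by lia.
  have -> : (1%:Z - K.+1%:Z = 0%:Z - K%:Z)%R by lia.
  have -> : ee K.+1 1 = ee K 0 by rewrite /ee; nia.
  have -> : q ^+ (ee K 1 + n.+1) = Q * q ^+ ee K 0.
    rewrite /Q -exprD; congr (_ ^+ _); have := E1 K; have : ee K.+1 1 = ee K 0 by rewrite /ee; nia.
    rewrite /n; lia.
  ring.
rewrite -T0 -T1.
set s1 := (\sum_(i < n) u1 i.+1); set s2 := (\sum_(i < n.+1) u2 i); set s3 := (\sum_(i < n.+1) u3 i.+2).
rewrite /=. ring.
lia.
Qed.

Lemma cong_prod1 {R : comPzRingType} (md : R) n (F : nat -> R) :
  (forall i, (i < n)%N -> cong md (F i) 1) -> cong md (\prod_(i < n) F i) 1.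
Proof.
move=> H; have := cong_prod (G := fun _ => 1) H; by rewrite big1_eq.
Qed.

Lemma prod_ext_cong {R : comPzRingType} (md : R) (F : nat -> R) B n : (B <= n)%N ->
  (forall i, (B <= i)%N -> cong md (F i) 1) ->
  cong md (\prod_(i < n) F i) (\prod_(i < B) F i).
Proof.
move=> H H0; rewrite -(subnKC H) big_split_ord /=.
rewrite -[X in cong _ _ X]mulr1; apply: congM; first exact: cong_refl.
by apply: (cong_prod1 (F := fun i => F (B + i)%N)) => i _; apply: H0; rewrite leq_addr.
Qed.

Lemma cong_1sub {R : comPzRingType} (q : R) M e : (M <= e)%N -> cong (q ^+ M) (1 - q ^+ e) 1.
Proof.
move=> H; rewrite -[X in cong _ _ X]subr0; apply: congD; first exact: cong_refl.
by apply: congN; apply: cong_pow0.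
Qed.

Lemma JT_trunc {R : comPzRingType} (z q : R) (a : int -> R)
  (Ha : forall j, z * a j = a (j + 1)%R + a (j - 1)%R) M K : (2 * M <= K)%N ->
  cong (q ^+ M)
    (\prod_(k < K) (1 + z * q ^+ (2*k+1) + q ^+ (4*k+2)) * a 0 *
       \prod_(m < M) (1 - (q ^+ 2) ^+ m.+1))
    (\sum_(i < (2*K).+1) a (i%:Z - K%:Z)%R * q ^+ ee K i).
Proof.
move=> HK; rewrite JT; last exact: Ha. rewrite big_distrl; apply: cong_sum_ord => -[i Hi] /=.
case: (leqP M (ee K i)) => He.
  apply: cong_trans (_ : cong _ _ 0) _.
    rewrite (_ : _ * _ = qb (q ^+ 2) (2 * K) i * a (i%:Z - K%:Z)%R *
        \prod_(m < M) (1 - (q ^+ 2) ^+ m.+1) * q ^+ ee K i); last by ring.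
    exact: cong_powM.
  by apply: cong_sym; apply: cong_powM.
have Hd : ((K - i) + (i - K) < M)%N.
  move: He; rewrite /ee; set d := ((K - i) + (i - K))%N; nia.
have HiM : (M <= i)%N by lia.
have HiK : (M < 2 * K - i)%N by lia.
rewrite -[X in cong _ _ X]mul1r.
rewrite (_ : _ * _ = (qb (q ^+ 2) (2 * K) i * \prod_(m < M) (1 - (q ^+ 2) ^+ m.+1))
    * (a (i%:Z - K%:Z)%R * q ^+ ee K i)); last by ring.
apply: congM; last exact: cong_refl.
apply: cong_trans (_ : cong _ _ (qb (q ^+ 2) (2 * K) i * \prod_(m < i) (1 - (q ^+ 2) ^+ m.+1))) _.
  apply: congM; first exact: cong_refl.
  apply: cong_sym; apply: (prod_ext_cong (F := fun m => 1 - (q ^+ 2) ^+ m.+1)) => // m Hm.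
  by rewrite -exprM; apply: cong_1sub; lia.
rewrite qb_half; apply: (cong_prod1 (F := fun m => 1 - (q ^+ 2) ^+ (2 * K - m))) => m Hm.
by rewrite -exprM; apply: cong_1sub; lia.
Qed.

Lemma pair_sum {R : comPzRingType} (g : nat -> R) K :
  \sum_(i < (2*K).+1) g ((K - i) + (i - K))%N = g 0%N + (\sum_(j < K) g j.+1) *+ 2.
Proof.
elim: K => [|K IH]; first by rewrite big_ord1 big_ord0 mul0rn addr0.
rewrite (_ : (2 * K.+1).+1 = (2 * K).+3)%N; last lia.
rewrite (sum_recl (fun i => g ((K.+1 - i) + (i - K.+1))%N)) big_ord_recr /=.
have -> : \sum_(i < (2 * K).+1) g ((K.+1 - i.+1) + (i.+1 - K.+1))%N
   = \sum_(i < (2 * K).+1) g ((K - i) + (i - K))%N by [].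
rewrite IH big_ord_recr /= mulrnDl.
rewrite (_ : ((K.+1 - (2 * K).+2) + ((2 * K).+2 - K.+1))%N = K.+1); last lia.
rewrite (_ : ((K.+1 - 0) + (0 - K.+1))%N = K.+1); last lia.
by rewrite mulr2n; ring.
Qed.


Lemma sgn_step {R : comPzRingType} (j : int) :
  (-1 : R) ^+ absz (j + 1)%R = - (-1) ^+ absz j.
Proof.
case: j => n.
  by rewrite (_ : (n%:Z + 1 = n.+1%:Z)%R) ?exprS ?mulN1r // intS addrC.
have -> : (Negz n + 1 = - n%:Z)%R by rewrite NegzE intS opprD addrC addNKr.
by rewrite abszN absz_nat /= exprS mulN1r opprK.
Qed.

Lemma sgn_rec {R : comPzRingType} (j : int) :
  (- 2%:R : R) * (-1) ^+ absz j = (-1) ^+ absz (j + 1)%R + (-1) ^+ absz (j - 1)%R.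
Proof.
have h1 := sgn_step (R := R) j; have h2 := sgn_step (R := R) (j - 1)%R.
rewrite subrK in h2; rewrite h1 h2; ring.
Qed.

Fixpoint bseq {R : comPzRingType} (z x0 x1 : R) (n : nat) : R :=
  match n with
  | 0 => x0
  | 1 => x1
  | S ((S m) as n') => z * bseq z x0 x1 n' - bseq z x0 x1 m
  end.

Definition bfun {R : comPzRingType} (z : R) (j : int) : R :=
  match j with Posz n => bseq z 1 0 n | Negz n => bseq z 1 z n.+1 end.

Lemma bfun_rec {R : comPzRingType} (z : R) j :
  z * bfun z j = bfun z (j + 1)%R + bfun z (j - 1)%R.
Proof.
case: j => n.
  case: n => [|m].
    by rewrite /bfun /= mulr1 add0r.
  rewrite (_ : (m.+1%:Z + 1 = m.+2%:Z)%R); last by rewrite (intS m.+1) addrC.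
  rewrite (_ : (m.+1%:Z - 1 = m%:Z)%R); last by rewrite intS addrAC subrr add0r.
  by rewrite /bfun /=; ring.
rewrite (_ : (Negz n - 1 = Negz n.+1)%R); last by rewrite !NegzE (intS n.+1) opprD addrC.
case: n => [|m].
  by rewrite (_ : (Negz 0 + 1 = 0)%R) //= /bfun /=; ring.
rewrite (_ : (Negz m.+1 + 1 = Negz m)%R); last by rewrite !NegzE (intS m.+1) opprD addrC addNKr.
by rewrite /bfun /=; ring.
Qed.

Lemma bfun0 {R : comPzRingType} (z : R) : bfun z 0 = 1.
Proof. by []. Qed.

Lemma final4 {S : comNzRingType} (G H u : {poly S}) M N :
  (N < M)%N -> cong ('X^M) (G * (1 + u *+ 2)) H ->
  (forall a, (forall m, a <> m ^ 2)%N -> H`_a = 0) ->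
  (forall b, (forall s, 0 < s -> b <> 4 * s ^ 2)%N -> u`_b = 0) ->
  (forall m s, N <> m ^ 2 + 4 * s ^ 2)%N ->
  exists X, G`_N = X *+ 4.
Proof.
move=> HNM [c Hcong] hH hu hN.
have Hc : forall a, (a < M)%N -> G`_a + (G * u)`_a *+ 2 = H`_a.
  move=> a Ha; have E : (G * (1 + u *+ 2))`_a = (H + 'X^M * c)`_a by rewrite Hcong.
  by move: E; rewrite mulrDr mulr1 mulrnAr !coefD coefXnM Ha addr0 => <-; rewrite mulr2n.
have Hg : forall a, (a < M)%N -> (forall m, a <> m ^ 2)%N -> G`_a = - ((G * u)`_a *+ 2).
  move=> a Ha Hs; have := Hc a Ha; rewrite hH // => E.
  by apply/eqP; rewrite -subr_eq0 opprK E.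
have -> : G`_N = - ((G * u)`_N *+ 2).
  by apply: Hg => // m Hm; apply: (hN m 0); rewrite Hm; lia.
have -> : (G * u)`_N = (\sum_(i < N.+1) (- (G * u)`_i * u`_(N - i))) *+ 2.
  rewrite coefM -sumrMnl; apply: eq_bigr => -[i Hi] _ /=.
  case: (classic (exists s, (0 < s)%N /\ (N - i = 4 * s ^ 2)%N)) => [[s [Hs Es]]|Hn].
    rewrite Hg; first ring.
      lia.
    by move=> m Hm; apply: (hN m s); lia.
  rewrite hu ?mulr0 ?mul0rn // => s Hs Es; apply: Hn; by exists s.
exists (- \sum_(i < N.+1) (- (G * u)`_i * u`_(N - i))).
by rewrite mulNrn; ring.
Qed.

Lemma numth (k r : nat) : r \in [:: 21%N; 33%N] ->
  forall m s, (36 * k + r <> m ^ 2 + 4 * s ^ 2)%N.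
Proof.
move=> Hr m s E.
have Hr' : (r = 21 \/ r = 33)%N by move: Hr; rewrite !inE => /orP[/eqP|/eqP]; auto.
have [a [r1 [Ha Hr1]]] : exists a r1, (m = 3 * a + r1 /\ r1 < 3)%N.
  by exists (m %/ 3)%N, (m %% 3)%N; split; [rewrite mulnC -divn_eq | rewrite ltn_mod].
have [b [r2 [Hb Hr2]]] : exists b r2, (s = 3 * b + r2 /\ r2 < 3)%N.
  by exists (s %/ 3)%N, (s %% 3)%N; split; [rewrite mulnC -divn_eq | rewrite ltn_mod].
subst m s.
case: r1 Hr1 E => [|[|[|r1]]] // _; case: r2 Hr2 => [|[|[|r2]]] // _; nia.
Qed.

Lemma cong_coef {R : comNzRingType} (p r : {poly R}) M :
  (forall k, (k < M)%N -> p`_k = r`_k) -> cong ('X^M) p r.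
Proof.
move=> H; exists (drop_poly M (p - r)).
have T0 : take_poly M (p - r) = 0.
  by apply/polyP => k; rewrite coef_take_poly coef0 coefB; case: ifP => // /H ->; rewrite subrr.
have := poly_take_drop M (p - r); rewrite T0 add0r mulrC => ->.
by rewrite addrC subrK.
Qed.

Lemma coef_cong {R : comNzRingType} (p r : {poly R}) M k :
  cong ('X^M) p r -> (k < M)%N -> p`_k = r`_k.
Proof. by case=> c -> Hk; rewrite coefD coefXnM Hk addr0. Qed.

Definition lft (M : nat) (f : ps) : {poly int} := \poly_(k < M) f k.

Lemma lft_coef M f k : (k < M)%N -> (lft M f)`_k = f k.
Proof. by move=> Hk; rewrite /lft coef_poly Hk. Qed.

Lemma lft_mul M f g : cong ('X^M) (lft M (ps_mul f g)) (lft M f * lft M g).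
Proof.
apply: cong_coef => k Hk; rewrite lft_coef // coefM /ps_mul.
apply: eq_bigr => -[i Hi] _ /=; rewrite !lft_coef //; lia.
Qed.

Lemma lft_one M : cong ('X^M) (lft M ps_one) 1.
Proof. by apply: cong_coef => k Hk; rewrite lft_coef // coef1 /ps_one; case: (k == 0%N). Qed.

Lemma lft_mon M m : cong ('X^M) (lft M (ps_mon m)) ('X^m).
Proof. by apply: cong_coef => k Hk; rewrite lft_coef // coefXn /ps_mon; case: (k == m). Qed.

Lemma lft_denom M m : cong ('X^M) (lft M (denom 0 m)) (1 + 'X^(2 * m)).
Proof.
apply: cong_coef => k Hk; rewrite lft_coef // coefD coef1 coefXn /denom mul0r addr0.
by rewrite -mul2n; case: (k == 0%N); case: (k == 2 * m)%N.
Qed.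

Lemma ps_inv_seq_size f n : size (ps_inv_seq f n) = n.+1.
Proof. by elim: n => [|n IH] //=; rewrite size_rcons IH. Qed.

Lemma ps_inv_seq_nth f n m : (m <= n)%N -> nth 0 (ps_inv_seq f n) m = ps_inv f m.
Proof.
elim: n m => [|n IH] m Hm.
  by have -> : m = 0%N by lia.
rewrite /= nth_rcons ps_inv_seq_size.
case: (ltnP m n.+1) => H1; first by rewrite IH.
have -> : m = n.+1 by lia.
by rewrite eqxx /ps_inv /= nth_rcons ps_inv_seq_size ltnn eqxx.
Qed.

Lemma ps_inv_S f n : ps_inv f n.+1 = - \sum_(k < n.+1) f k.+1 * ps_inv f (n - k)%N.
Proof.
rewrite {1}/ps_inv /= nth_rcons ps_inv_seq_size ltnn eqxx.
by congr (- _); apply: eq_bigr => k _; rewrite ps_inv_seq_nth // leq_subr.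
Qed.

Lemma ps_mul_inv f : f 0%N = 1 -> forall n, ps_mul f (ps_inv f) n = ps_one n.
Proof.
move=> H0 [|n].
  by rewrite /ps_mul big_ord1 H0 mul1r /ps_inv /ps_one.
rewrite /ps_mul big_ord_recl /= H0 mul1r subn0 ps_inv_S /ps_one /=.
rewrite addrC; apply/eqP; rewrite subr_eq0; apply/eqP.
by apply: eq_bigr => i _; rewrite /bump /= add1n subSS.
Qed.

Lemma lft_bigprod M (I : finType) (P : pred I) (F : I -> ps) :
  cong ('X^M) (lft M (\big[ps_mul/ps_one]_(i | P i) F i)) (\prod_(i | P i) lft M (F i)).
Proof.
apply: (big_ind2 (fun f p => cong ('X^M) (lft M f) p)).
- exact: lft_one.
- move=> f1 p1 f2 p2 H1 H2; apply: cong_trans (lft_mul _ _ _) _; exact: congM.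
- by move=> i _; apply: cong_refl.
Qed.

Lemma factor_rel M m : odd m ->
  cong ('X^M) (lft M (factor 0 m) * (1 + 'X^(2 * m))) ('X^m).
Proof.
move=> Hm.
have Hd0 : denom 0 m 0%N = 1.
  rewrite /denom mul0r addr0 eqxx (_ : (0 == m.*2)%N = false) ?addr0 //.
  by apply/negbTE; rewrite eq_sym double_eq0; apply/eqP => E; move: Hm; rewrite E.
set d := denom 0 m; set v := ps_inv d.
have E1 : cong ('X^M) (lft M (factor 0 m)) ('X^m * lft M v).
  apply: cong_trans (lft_mul _ _ _) _; apply: congM; [exact: lft_mon | exact: cong_refl].
have E2 : cong ('X^M) (lft M v * lft M d) 1.
  apply: cong_trans (_ : cong _ _ (lft M (ps_mul d v))) _.
    by rewrite mulrC; apply: cong_sym; apply: lft_mul.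
  apply: cong_trans (_ : cong _ _ (lft M ps_one)) (lft_one M).
  by apply: cong_coef => k Hk; rewrite !lft_coef // ps_mul_inv.
apply: cong_trans (_ : cong _ _ ('X^m * (lft M v * lft M d))) _.
  rewrite mulrA; apply: congM => //; apply: cong_sym; exact: lft_denom.
rewrite -[X in cong _ _ X]mulr1; apply: congM => //; exact: cong_refl.
Qed.

Notation TT := {poly {poly int}}.
Definition zz : TT := ('X)%:P.
Definition mp (p : {poly int}) : TT := map_poly polyC p.
Definition hh M (i : nat) : TT := if odd i then zz * mp (lft M (factor 0 i)) else 0.
Definition GG M : TT := \prod_(i < M) (hh M i + 1).

Lemma m_odd_G N t : m_odd 0 t N = ((GG N.+1)`_N)`_t.
Proof.
rewrite /GG bigA_distr !coef_sum /m_odd big_mkcond /=.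
apply: eq_bigr => S _.
rewrite -big_mkcond /=.
case: (boolP [forall i in S, odd i]) => Hodd.
  have -> : \prod_(i in S) hh N.+1 i = zz ^+ #|S| * mp (\prod_(i in S) lft N.+1 (factor 0 i)).
    rewrite /mp rmorph_prod -prodr_const -big_split /=.
    apply: eq_bigr => i Hi; move/forall_inP: Hodd => /(_ i Hi) Ho.
    by rewrite /hh Ho.
  rewrite /zz -rmorphXn coefCM /mp coef_map /= coefXnM coefC.
  rewrite -(coef_cong (lft_bigprod _ _ _)) ?lft_coef //.
  rewrite andbT.
  have [E|E] := eqVneq #|S| t.
    by rewrite E ltnn subnn eqxx.
  case: (ltnP t #|S|) => Ht //.
  by rewrite (_ : (t - #|S| == 0)%N = false) //; apply/negbTE; lia.
rewrite andbF.
move/forall_inPn: Hodd => [i Hi Hnodd].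
by rewrite (bigD1 i) //= /hh (negbTE Hnodd) mul0r coef0 coef0.
Qed.

Lemma cong_prod_ord {R : comPzRingType} (m : R) n (F G : 'I_n -> R) :
  (forall i, cong m (F i) (G i)) ->
  cong m (\prod_(i < n) F i) (\prod_(i < n) G i).
Proof.
move=> H; elim/big_rec2: _ => [|i x y _ Hxy]; first exact: cong_refl.
by apply: congM.
Qed.

Lemma cong_mp M (a b : {poly int}) : cong ('X^M) a b -> cong ('X^M) (mp a) (mp b).
Proof. by case=> c ->; exists (mp c); rewrite /mp rmorphD rmorphM /= map_polyXn. Qed.

Definition DD M : TT := \prod_(i < M) (if odd i then 1 + 'X^(2*i) else 1).
Definition PhiA M : TT := \prod_(i < M) (if odd i then 1 + zz * 'X^i + 'X^(2*i) else 1).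

Lemma GD M : cong ('X^M) (GG M * DD M) (PhiA M).
Proof.
rewrite /GG /DD /PhiA -big_split; apply: cong_prod_ord => i /=.
rewrite /hh; case: (odd i) (factor_rel M (m := i)) => [/(_ isT) H|_]; last first.
  by rewrite add0r mul1r; exact: cong_refl.
have H2 := cong_mp H.
rewrite /mp rmorphM rmorphD /= rmorph1 map_polyXn in H2.
rewrite (_ : (zz * map_poly polyC (lft M (factor 0 i)) + 1) * (1 + 'X^(2 * i)) =
   zz * (map_poly polyC (lft M (factor 0 i)) * (1 + 'X^(2 * i))) + (1 + 'X^(2 * i))); last by ring.
rewrite (_ : 1 + zz * 'X^i + 'X^(2 * i) = zz * 'X^i + (1 + 'X^(2 * i))); last by ring.
apply: congD; last exact: cong_refl.
by apply: congM; [exact: cong_refl | rewrite /mp map_polyXn in H2].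
Qed.

Lemma odd_prod {R : comPzRingType} (F : nat -> R) M :
  \prod_(i < M) (if odd i then F i else 1) = \prod_(k < M./2) F (2 * k + 1)%N.
Proof.
elim: M => [|M IH]; first by rewrite !big_ord0.
rewrite big_ord_recr /= IH.
rewrite uphalf_half.
case: (boolP (odd M)) => Ho /=.
  rewrite add1n big_ord_recr /=; congr (_ * F _).
  by have := odd_double_half M; rewrite Ho -muln2; lia.
by rewrite mulr1 add0n.
Qed.

Lemma cong_1add {R : comPzRingType} (q : R) M e : (M <= e)%N -> cong (q ^+ M) (1 + q ^+ e) 1.
Proof.
move=> H; rewrite -[X in cong _ _ X]addr0; apply: congD; first exact: cong_refl.
by apply: cong_pow0.
Qed.

Lemma ext_sym {R : comPzRingType} (md : R) (F : nat -> R) B n : (B <= n)%N ->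
  (forall i, (B <= i)%N -> cong md (F i) 1) ->
  cong md (\prod_(i < B) F i) (\prod_(i < n) F i).
Proof. by move=> H1 H2; apply: cong_sym; apply: prod_ext_cong. Qed.

Lemma split_eo {R : comPzRingType} (F : nat -> R) n :
  \prod_(m < 2 * n) F m = \prod_(k < n) F (2 * k)%N * \prod_(k < n) F (2 * k + 1)%N.
Proof.
elim: n => [|n IH]; first by rewrite !big_ord0 mulr1.
rewrite (_ : (2 * n.+1 = (2 * n).+2)%N); last lia.
rewrite !big_ord_recr /= IH (_ : (2 * n + 1 = (2 * n).+1)%N); last lia.
ring.
Qed.

Lemma W_ident M K : (M <= K)%N ->
  cong ('X^M) (DD M * \prod_(m < M) (1 - ('X^2 : TT) ^+ m.+1))
   (\prod_(k < K) (1 + (- 2%:R) * ('X^4 : TT) ^+ (2*k+1) + ('X^4) ^+ (4*k+2)) * 1 *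
      \prod_(m < M) (1 - (('X^4 : TT) ^+ 2) ^+ m.+1)).
Proof.
move=> HMK.
set A := \prod_(k < M) (1 - ('X : TT) ^+ (8 * k + 4)).
set C := \prod_(k < M) (1 - ('X : TT) ^+ (8 * k + 8)).
have s1 : cong ('X^M) (DD M) (\prod_(k < M) (1 + ('X : TT) ^+ (4 * k + 2))).
  rewrite /DD (odd_prod (fun i => 1 + ('X : TT) ^+ (2 * i))).
  rewrite (eq_bigr (fun k : 'I_ _ => 1 + ('X : TT) ^+ (4 * k + 2))); last first.
    by move=> k _; congr (_ + _ ^+ _); lia.
  apply: (ext_sym (F := fun k => 1 + ('X : TT) ^+ (4 * k + 2))).
    by rewrite -divn2 leq_div.
  move=> i Hi; apply: cong_1add; have := odd_double_half M; lia.
have s2 : cong ('X^M) (\prod_(m < M) (1 - ('X^2 : TT) ^+ m.+1))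
    (\prod_(k < M) (1 - ('X : TT) ^+ (4 * k + 2)) * \prod_(k < M) (1 - ('X : TT) ^+ (4 * k + 4))).
  rewrite (eq_bigr (fun m : 'I_ _ => 1 - ('X : TT) ^+ (2 * m + 2))); last first.
    by move=> k _; rewrite -exprM; congr (_ - _ ^+ _); lia.
  apply: cong_trans (ext_sym (F := fun m => 1 - ('X : TT) ^+ (2 * m + 2)) (n := 2 * M) _ _) _.
  - lia.
  - by move=> i Hi; apply: cong_1sub; lia.
  rewrite (split_eo (fun i => 1 - ('X : TT) ^+ (2 * i + 2)) M); apply: congM.
    by apply: cong_prod_ord => i; rewrite (_ : (2 * (2 * i) + 2 = 4 * i + 2)%N); [exact: cong_refl | lia].
  by apply: cong_prod_ord => i; rewrite (_ : (2 * (2 * i + 1) + 2 = 4 * i + 4)%N); [exact: cong_refl | lia].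
have s3 : cong ('X^M) (\prod_(k < M) (1 - ('X : TT) ^+ (4 * k + 4))) (A * C).
  apply: cong_trans (ext_sym (F := fun m => 1 - ('X : TT) ^+ (4 * m + 4)) (n := 2 * M) _ _) _.
  - lia.
  - by move=> i Hi; apply: cong_1sub; lia.
  rewrite (split_eo (fun i => 1 - ('X : TT) ^+ (4 * i + 4)) M); apply: congM.
    by apply: cong_prod_ord => i; rewrite (_ : (4 * (2 * i) + 4 = 8 * i + 4)%N); [exact: cong_refl | lia].
  by apply: cong_prod_ord => i; rewrite (_ : (4 * (2 * i + 1) + 4 = 8 * i + 8)%N); [exact: cong_refl | lia].
have s4 : \prod_(k < M) (1 + ('X : TT) ^+ (4 * k + 2)) * \prod_(k < M) (1 - ('X : TT) ^+ (4 * k + 2)) = A.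
  rewrite -big_split; apply: eq_bigr => k _ /=.
  rewrite (_ : (8 * k + 4 = (4 * k + 2) + (4 * k + 2))%N) ?exprD; last lia.
  ring.
have s5 : cong ('X^M)
   (\prod_(k < K) (1 + (- 2%:R) * ('X^4 : TT) ^+ (2*k+1) + ('X^4) ^+ (4*k+2)) * 1 *
      \prod_(m < M) (1 - (('X^4 : TT) ^+ 2) ^+ m.+1)) (A * A * C).
  rewrite mulr1; apply: congM.
    rewrite (eq_bigr (fun k : 'I_ _ => (1 - ('X : TT) ^+ (8 * k + 4)) * (1 - ('X : TT) ^+ (8 * k + 4)))); last first.
      move=> k _; rewrite -!exprM (_ : (4 * (4 * k + 2) = (8 * k + 4) + (8 * k + 4))%N) ?exprD; last lia.
      ring.
    rewrite big_split /=; apply: congM.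
      by apply: (prod_ext_cong (F := fun k => 1 - ('X : TT) ^+ (8 * k + 4))) => // i Hi; apply: cong_1sub; lia.
    by apply: (prod_ext_cong (F := fun k => 1 - ('X : TT) ^+ (8 * k + 4))) => // i Hi; apply: cong_1sub; lia.
  rewrite (eq_bigr (fun k : 'I_ _ => 1 - ('X : TT) ^+ (8 * k + 8))); [exact: cong_refl|].
  by move=> k _; rewrite -!exprM; congr (_ - _ ^+ _); lia.
apply: cong_trans (cong_sym s5).
apply: cong_trans (congM s1 s2) _.
rewrite mulrA s4 -mulrA; apply: congM; [exact: cong_refl | exact: s3].
Qed.

Lemma cong_1zadd {R : comPzRingType} (q c : R) M e f : (M <= e)%N -> (M <= f)%N ->
  cong (q ^+ M) (1 + c * q ^+ e + q ^+ f) 1.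
Proof.
move=> H1 H2; rewrite -[X in cong _ _ X]addr0 -addrA; apply: congD; first exact: cong_refl.
rewrite -[X in cong _ _ X]addr0; apply: congD; [exact: cong_powM | exact: cong_pow0].
Qed.

Definition aa (j : int) : TT := (bfun ('X : {poly int}) j)%:P.

Lemma aa_rec j : zz * aa j = aa (j + 1)%R + aa (j - 1)%R.
Proof. by rewrite /zz /aa -polyCM -polyCD bfun_rec. Qed.

Lemma main_cong N (t : nat) :
  let M := N.+1 in let K := (2 * M)%N in
  cong ('X^M) (GG M * (1 + (\sum_(j < K) (-1) ^+ j.+1 * ('X^4 : TT) ^+ (j.+1 ^ 2)) *+ 2))
     (\sum_(i < (2*K).+1) aa (i%:Z - K%:Z)%R * 'X ^+ ee K i).
Proof.
move=> M K.
have HK : (2 * M <= K)%N by [].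
have JT1 := JT_trunc 'X aa_rec HK.
rewrite /aa bfun0 mulr1 in JT1.
have JT2 := JT_trunc ('X^4 : TT) (sgn_rec (R := TT)) HK.
rewrite -exprM (_ : (4 * M = M + 3 * M)%N) ?exprD in JT2; last lia.
have JT2' := cong_weak JT2.
have Hth : \sum_(i < (2 * K).+1) (-1) ^+ absz (i%:Z - K%:Z)%R * ('X^4 : TT) ^+ ee K i
   = 1 + (\sum_(j < K) (-1) ^+ j.+1 * ('X^4 : TT) ^+ (j.+1 ^ 2)) *+ 2.
  rewrite (eq_bigr (fun i : 'I_ _ => (fun d => (-1) ^+ d * ('X^4 : TT) ^+ (d ^ 2)) ((K - i) + (i - K))%N)).
    by rewrite (pair_sum (fun d => (-1) ^+ d * ('X^4 : TT) ^+ (d ^ 2)) K) /= expr0 mul1r.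
  move=> i _ /=; rewrite /ee; congr (_ ^+ _ * _); lia.
rewrite Hth in JT2'.
have W := W_ident (M := M) (K := K).
have E1 : ((-1 : TT) ^+ absz 0) = 1 by rewrite expr0.
rewrite E1 in JT2'.
apply: cong_trans (_ : cong _ _ (GG M * (DD M * \prod_(m < M) (1 - ('X^2 : TT) ^+ m.+1)))) _.
  apply: congM; first exact: cong_refl.
  apply: cong_sym; apply: cong_trans (W _) _; first by rewrite /K; lia.
  exact: JT2'.
rewrite mulrA.
apply: cong_trans _ JT1.
apply: congM; last exact: cong_refl.
apply: cong_trans (GD M) _.
rewrite /PhiA (odd_prod (fun i => 1 + zz * 'X^i + 'X^(2 * i))).
rewrite (eq_bigr (fun k : 'I_ _ => 1 + zz * ('X : TT) ^+ (2 * k + 1) + 'X ^+ (4 * k + 2))); last first.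
  by move=> k _; congr (_ + _ + _ ^+ _); lia.
apply: (ext_sym (F := fun k => 1 + zz * ('X : TT) ^+ (2 * k + 1) + 'X ^+ (4 * k + 2))).
  by rewrite /K -divn2; apply: leq_trans (leq_div _ _) _; lia.
move=> i Hi; apply: cong_1zadd; have := odd_double_half M; lia.
Qed.

Theorem mainTheorem15 (J N r : nat) :
  r \in [:: 21%N; 33%N] ->
  (4 %| m_odd 0 (2 * J + 1)%N (36 * N + r)%N)%Z.
Proof.
move=> Hr.
set n := (36 * N + r)%N; set t := (2 * J + 1)%N.
rewrite m_odd_G.
have HC := main_cong n t; rewrite /= in HC.
set K := (2 * n.+1)%N in HC.
have hH : forall a, (forall m, a <> m ^ 2)%N ->
    (\sum_(i < (2 * K).+1) aa (i%:Z - K%:Z)%R * 'X ^+ ee K i)`_a = 0.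
  move=> a Ha; rewrite coef_sum big1 // => i _.
  rewrite /aa coefCM coefXn (_ : (a == ee _ i) = false) ?mulr0 //.
  by apply/negbTE/eqP => E; apply: (Ha ((_ - i) + (i - _))%N); rewrite E.
have hu : forall b, (forall s, 0 < s -> b <> 4 * s ^ 2)%N ->
    (\sum_(j < K) (-1) ^+ j.+1 * ('X^4 : TT) ^+ (j.+1 ^ 2))`_b = 0.
  move=> b Hb; rewrite coef_sum big1 // => j _.
  rewrite (_ : (-1 : TT) ^+ j.+1 = ((-1 : {poly int}) ^+ j.+1)%:P); last by rewrite polyC_exp polyCN.
  rewrite coefCM -exprM coefXn (_ : (b == 4 * j.+1 ^ 2)%N = false) ?mulr0 //.
  by apply/negbTE/eqP => E; apply: (Hb j.+1).
have [X HX] := final4 (ltnSn n) HC hH hu (@numth N r Hr).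
rewrite HX coefMn (_ : X`_t *+ 4 = X`_t * 4); last by rewrite mulr_natr.
by apply: dvdz_mull; rewrite dvdzz.
Qed.
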